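(* Let $L\ge6$ be an even integer, let $\xi=(\xi_k)$ be i.i.d. $N(0,1)$, and let $X=(X_k,k\in\mathbb Z)$ be a sequence of real random variables with finite $L$-th moments such that for every integer $n\ge0$ and every integer $h\ge 4L^{n+1}$, $$E[S(X,h)/\sqrt h]^L\le h^{-L/2}\sum_{j=1}^h\binom hj\left(\tfrac12\right)^hE(S(\xi,j))^L-h^{-L/2}\cdot L!\cdot2^{-L}\cdot(L^n)^{L/2}\sum_{j=2L^{n+1}}^h\binom hj\left(\tfrac12\right)^h.$$ Then for every integer $h\ge 4L$, $$E[S(X,h)/\sqrt h]^L\le h^{-L/2}\sum_{j=1}^h\binom hj\left(\tfrac12\right)^hE(S(\xi,j))^L-2^{-(5L+2)/2}\cdot L!\cdot L^{-L}.$$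
   Context: $S(X,h):=X_1+\dots+X_h$, and similarly for $\xi$. *)

(* Defs.v *)
From Stdlib Require Import Reals List Arith.
Open Scope R_scope.

(* sumR a b f = f a + f (a+1) + ... + f b ; empty (= 0) when b < a. *)
Definition sumR (a b : nat) (f : nat -> R) : R :=
  fold_right Rplus 0 (map f (seq a (S b - a))).

(* The common right-hand "main term":
   h^{-L/2} * sum_{j=1}^h C(h,j) (1/2)^h * g j,
   where g j stands for E (S(xi,j))^L.  L is even, so h^{-L/2} = 1/h^(L/2). *)
Definition main_term (L h : nat) (g : nat -> R) : R :=
  / (INR h ^ (L / 2)) *
  sumR 1 h (fun j => Binomial.C h j * (/ 2) ^ h * g j).

(* Main.v *)
Require Import Defs.
From Stdlib Require Import Reals Lra Lia List Arith.
Open Scope R_scope.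

Lemma fold_seq_sum (f : nat -> R) n k :
  fold_right Rplus 0 (map f (seq k (S n))) = sum_f_R0 (fun i => f (k+i)%nat) n.
Proof.
revert k; induction n; intros k.
- simpl. rewrite Nat.add_0_r. lra.
- replace (fold_right Rplus 0 (map f (seq k (S (S n))))) with
    (f k + fold_right Rplus 0 (map f (seq (S k) (S n)))) by reflexivity.
  rewrite IHn.
  rewrite (decomp_sum (fun i => f (k+i)%nat) (S n)) by lia.
  rewrite Nat.add_0_r. simpl pred. f_equal. apply sum_eq. intros. f_equal. lia.
Qed.

Lemma sumR_eq f k h : (k <= h)%nat -> sumR k h f = sum_f_R0 (fun i => f (k+i)%nat) (h-k).
Proof.
intros. unfold sumR. replace (S h - k)%nat with (S (h-k)) by lia. apply fold_seq_sum.
Qed.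

Lemma sum_rev (a : nat -> R) N : sum_f_R0 (fun i => a (N-i)%nat) N = sum_f_R0 a N.
Proof.
induction N.
- reflexivity.
- rewrite decomp_sum by lia. simpl pred. rewrite Nat.sub_0_r.
  rewrite (sum_eq _ (fun i => a (N - i)%nat)) by (intros; f_equal; lia).
  rewrite IHN. simpl. lra.
Qed.

Lemma C_nonneg n k : 0 <= C n k.
Proof.
unfold C. apply Rle_mult_inv_pos. apply pos_INR.
apply Rmult_lt_0_compat; apply lt_0_INR, lt_O_fact.
Qed.

Lemma binom_tail h k : (1 <= k)%nat -> (2*k <= h)%nat ->
  / 2 <= sumR k h (fun j => C h j * (/2)^h).
Proof.
intros Hk Hkh.
rewrite sumR_eq by lia.
remember (sum_f_R0 (fun i => C h (k+i)) (h-k)) as BB eqn:HBB.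
assert (HB : 2 ^ h <= 2 * BB).
{ assert (Htot : 2 ^ h = sum_f_R0 (fun i => C h i) h).
  { replace 2 with (1+1) by lra. rewrite binomial. apply sum_eq. intros. rewrite !pow1. lra. }
  rewrite Htot. rewrite (tech2 _ (k-1) h) by lia.
  replace (h - S (k-1))%nat with (h-k)%nat by lia.
  rewrite (sum_eq (fun i => C h (S (k-1) + i)) (fun i => C h (k+i))) by (intros; f_equal; lia).
  rewrite <- HBB.
  assert (HA : sum_f_R0 (fun i => C h i) (k-1) <= BB).
  { rewrite HBB. rewrite <- (sum_rev (fun i => C h (k+i)) (h-k)).
    rewrite (tech2 _ (k-1) (h-k)) by lia.
    assert (0 <= sum_f_R0 (fun i => C h (k + (h - k - (S (k - 1) + i))))%nat (h - k - S (k - 1)))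
      by (apply cond_pos_sum; intros; apply C_nonneg).
    assert (sum_f_R0 (fun i => C h i) (k-1) = sum_f_R0 (fun i => C h (k + (h - k - i))%nat) (k-1)).
    { apply sum_eq. intros. rewrite pascal_step1 by lia. f_equal. lia. }
    lra. }
  lra. }
rewrite <- scal_sum.
assert (H2 : (/2)^h * 2^h = 1).
{ rewrite <- Rpow_mult_distr. rewrite Rinv_l by lra. apply pow1. }
assert (0 < (/2)^h) by (apply pow_lt; lra).
nra.
Qed.
Lemma key (H P Q two E F Sb : R) : 0<H -> 0<P -> 0<Q -> 0 < two -> H <= two*P*Q ->
  2*two*two <= E -> /2 <= Sb -> 0 < F ->
  /E * F * /Q <= /H * F * /two * P * Sb.
Proof.
intros.
assert (h1: /(two*P*Q) <= /H) by (apply Rinv_le_contravar; lra).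
assert (h2: /E <= /(2*two*two)) by (apply Rinv_le_contravar; nra).
apply Rle_trans with (/(2*two*two) * F * /Q).
{ apply Rmult_le_compat_r. left; apply Rinv_0_lt_compat; lra. apply Rmult_le_compat_r; lra. }
apply Rle_trans with (/(two*P*Q) * F * /two * P * /2).
{ right. field. lra. }
assert (0 < /two) by (apply Rinv_0_lt_compat; lra).
assert (0 < /(two*P*Q)) by (apply Rinv_0_lt_compat; nra).
apply Rmult_le_compat.
- repeat apply Rmult_le_pos; lra.
- lra.
- apply Rmult_le_compat_r; [lra|]. apply Rmult_le_compat_r; [lra|]. apply Rmult_le_compat_r; lra.
- lra.
Qed.

Lemma find_n (L h : nat) : (2 <= L)%nat -> (4 * L <= h)%nat ->
  exists n, (4 * L ^ S n <= h)%nat /\ (h < 4 * L ^ S (S n))%nat.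
Proof.
intros HL Hh. apply Classical_Prop.NNPP. intro Hno.
assert (Hall : forall n, (4 * L ^ S n <= h)%nat).
{ induction n. simpl. lia.
  destruct (Nat.lt_ge_cases h (4 * L ^ S (S n))). exfalso; apply Hno; eauto. auto. }
specialize (Hall h). pose proof (Nat.pow_gt_lin_r L (S h)). lia.
Qed.

Theorem lemma5p2 (L : nat) (m g : nat -> R) :
  (6 <= L)%nat -> Nat.Even L ->
  (forall (n h : nat), (4 * L ^ (S n) <= h)%nat ->
     m h <= main_term L h g
            - / (INR h ^ (L / 2)) * INR (fact L) * / (2 ^ L)
              * (INR (L ^ n)) ^ (L / 2)
              * sumR (2 * L ^ (S n)) h (fun j => Binomial.C h j * (/ 2) ^ h)) ->
  forall h : nat, (4 * L <= h)%nat ->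
    m h <= main_term L h g
           - / (2 ^ ((5 * L + 2) / 2)) * INR (fact L) * / (INR L ^ L).
Proof.
intros HL [M HM] Hyp h Hh.
destruct (find_n L h) as [n [H1 H2]]; try lia.
specialize (Hyp n h H1).
assert (HM2 : (L / 2 = M)%nat) by (subst; rewrite Nat.mul_comm; apply Nat.div_mul; lia).
assert (HM5 : ((5 * L + 2) / 2 = 5 * M + 1)%nat)
  by (subst; replace (5 * (2*M) + 2)%nat with ((5*M+1)*2)%nat by lia; apply Nat.div_mul; lia).
rewrite HM2 in Hyp. rewrite HM5.
assert (Hsb : /2 <= sumR (2 * L ^ S n) h (fun j => C h j * (/ 2) ^ h)).
{ apply binom_tail. pose proof (Nat.pow_gt_lin_r L (S n)). lia. lia. }
assert (HLpos : 0 < INR L) by (apply lt_0_INR; lia).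
assert (Hkey : / 2 ^ (5 * M + 1) * INR (fact L) * / INR L ^ L <=
   / INR h ^ M * INR (fact L) * / 2 ^ L * INR (L ^ n) ^ M *
   sumR (2 * L ^ S n) h (fun j => C h j * (/ 2) ^ h)).
{ apply key.
  - apply pow_lt. apply lt_0_INR. lia.
  - apply pow_lt. apply lt_0_INR. pose proof (Nat.pow_gt_lin_r L n). lia.
  - apply pow_lt; lra.
  - apply pow_lt; lra.
  - assert (Hh' : INR h <= 4 * INR L ^ 2 * INR (L ^ n)).
    { rewrite pow_INR. replace 4 with (INR 4) by (simpl; lra).
      rewrite <- !pow_INR, <- !mult_INR. apply le_INR.
      replace (L ^ S (S n))%nat with (L ^ 2 * L ^ n)%nat in H2 by (simpl; lia). lia. }
    apply Rle_trans with ((4 * INR L ^ 2 * INR (L ^ n)) ^ M).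
    { apply pow_incr. split; [apply pos_INR | exact Hh']. }
    rewrite !Rpow_mult_distr. rewrite <- !pow_mult.
    replace 4 with (2^2) by lra. rewrite <- pow_mult.
    subst L. replace (2 * M)%nat with (2 * M)%nat by lia.
    rewrite Nat.mul_comm. lra.
  - replace (5 * M + 1)%nat with (S (2*M + 2*M + M))%nat by lia.
    rewrite HM. simpl. rewrite !pow_add.
    assert (1 <= 2 ^ M) by (apply pow_R1_Rle; lra).
    assert (0 < 2 ^ M) by (apply pow_lt; lra). nra.
  - lra.
  - apply lt_0_INR, lt_O_fact. }
lra.
Qed.
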